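(* For every $m\in\mathbb{N}_0$ and every real $t$ with $|t|<1$, \[ \frac{(\operatorname{arcsinh} t)^{m}}{\sqrt{1+t^2}}=t^m\left[1+\sum_{k=1}^{\infty}\frac{Q(m+1,2k;2)}{\binom{m+2k}{m}}\frac{(2t)^{2k}}{(2k)!}\right]. \]
   Context: $s(n,k)$ denotes the signed Stirling numbers of the first kind, defined by $\frac{[\ln(1+x)]^k}{k!}=\sum_{n=k}^\infty s(n,k)\frac{x^n}{n!}$ for $|x|<1$; equivalently $\prod_{j=0}^{n-1}(z-j)=\sum_{k=0}^n s(n,k)z^k$. For $m\in\mathbb{N}$, $k\in\mathbb{N}_0$ and $\alpha\in\mathbb{R}$ define \[ Q(m,k;\alpha)=\sum_{\ell=0}^{k}\binom{m+\ell-1}{m-1}\, s(m+k-1,m+\ell-1)\left(\frac{m+k-\alpha}{2}\right)^{\ell}, \] with the convention $0^0=1$. *)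

(* Defs.v *)
From Stdlib Require Import Reals.
From Coquelicot Require Import Coquelicot.
Open Scope R_scope.

(* Signed Stirling numbers of the first kind s(n,k), defined by the
   standard recurrence equivalent to prod_{j<n} (z - j) = sum_k s(n,k) z^k:
   s(0,0)=1, s(0,k+1)=0, s(n+1,0)=0, s(n+1,k+1) = s(n,k) - n s(n,k+1). *)
Fixpoint stirling1 (n k : nat) {struct n} : R :=
  match n, k with
  | O, O => 1
  | O, S _ => 0
  | S _, O => 0
  | S n', S k' => stirling1 n' k' - INR n' * stirling1 n' (S k')
  end.

(* Q(m,k;alpha) = sum_{l=0}^k C(m+l-1, m-1) s(m+k-1, m+l-1) ((m+k-alpha)/2)^l
   (intended for m >= 1; Stdlib's pow has 0^0 = 1). *)
Definition Q (m k : nat) (alpha : R) : R :=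
  sum_f_R0 (fun l => Binomial.C (m + l - 1) (m - 1)
                     * stirling1 (m + k - 1) (m + l - 1)
                     * ((INR (m + k) - alpha) / 2) ^ l) k.

(* Main.v *)
Require Import Defs.
From Stdlib Require Import Reals.
From Coquelicot Require Import Coquelicot.
From Stdlib Require Import Lia Lra Psatz.
Open Scope R_scope.

Fixpoint binom (n k : nat) : R :=
  match n, k with
  | O, O => 1
  | O, S _ => 0
  | S _, O => 1
  | S n', S k' => binom n' k' + binom n' (S k')
  end.

Lemma binom_0 n : binom n 0 = 1.
Proof. destruct n; reflexivity. Qed.

Lemma binom_gt : forall n k, (n < k)%nat -> binom n k = 0.
Proof.
  induction n; intros k H; destruct k; simpl; try lia; try reflexivity.
  rewrite !IHn by lia. ring.
Qed.

Lemma binom_C : forall n k, (k <= n)%nat -> binom n k = Binomial.C n k.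
Proof.
  induction n; intros k H.
  - destruct k; [|lia]. simpl. rewrite C_n_0. reflexivity.
  - destruct k.
    + rewrite C_n_0. reflexivity.
    + simpl. destruct (Nat.eq_dec k n) as [->|Hk].
      * rewrite (binom_gt n (S n)) by lia. rewrite IHn by lia. rewrite !C_n_n. ring.
      * rewrite !IHn by lia. apply pascal. lia.
Qed.

Lemma stir_gt : forall n k, (n < k)%nat -> stirling1 n k = 0.
Proof.
  induction n; intros k H; destruct k; simpl; try lia; try reflexivity.
  rewrite !IHn by lia. ring.
Qed.

Lemma stir_S N j : stirling1 (S N) j =
  (match j with O => 0 | S j' => stirling1 N j' end) - INR N * stirling1 N j.
Proof.
  destruct j; [|reflexivity].
  destruct N; simpl; ring.
Qed.

Lemma sum_S (f : nat -> R) n :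
  sum_f_R0 f (S n) = f O + sum_f_R0 (fun i => f (S i)) n.
Proof.
  induction n; simpl in *; [ring|]. rewrite IHn. ring.
Qed.

Lemma sum_top0 (f : nat -> R) n : f (S n) = 0 -> sum_f_R0 f (S n) = sum_f_R0 f n.
Proof. intros H; simpl; rewrite H; ring. Qed.

Lemma sum_ext_zero (f : nat -> R) a b :
  (forall i, (a < i)%nat -> f i = 0) -> sum_f_R0 f (a + b) = sum_f_R0 f a.
Proof.
  intros H; induction b.
  - rewrite Nat.add_0_r; reflexivity.
  - rewrite Nat.add_succ_r. simpl. rewrite IHb, H by lia. ring.
Qed.

Definition W (c : R) (N m : nat) : R :=
  sum_f_R0 (fun l => binom (m + l) m * stirling1 N (m + l) * c ^ l) N.

Definition Wm1 c N m := match m with O => 0 | S m' => W c N m' end.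
Definition Wm2 c N m := match m with S (S m') => W c N m' | _ => 0 end.

Lemma W_A c N m : W c (S N) m = Wm1 c N m + (c - INR N) * W c N m.
Proof.
  unfold W. destruct m as [|m]; unfold Wm1.
  - set (g := fun l => binom (0 + l) 0 * stirling1 N (0 + l) * c ^ l).
    assert (E1 : sum_f_R0 g (S N) = sum_f_R0 g N).
    { apply sum_top0. unfold g. rewrite stir_gt by lia. ring. }
    rewrite sum_S in E1.
    assert (E2 : INR N * g O = 0). { unfold g. destruct N; simpl; ring. }
    rewrite sum_S.
    replace (binom (0 + 0) 0 * stirling1 (S N) (0 + 0) * c ^ 0) with 0 by (simpl; ring).
    transitivity (sum_f_R0 (fun i => g i * c - INR N * g (S i)) N).
    + rewrite Rplus_0_l. apply sum_eq. intros i _. unfold g. simpl Nat.add. rewrite stir_S, !binom_0. simpl. ring.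
    + rewrite minus_sum.
      replace (sum_f_R0 (fun i => g i * c) N) with (c * sum_f_R0 g N) by (rewrite scal_sum; reflexivity).
      replace (sum_f_R0 (fun i => INR N * g (S i)) N) with (INR N * sum_f_R0 (fun i => g (S i)) N)
        by (rewrite scal_sum; apply sum_eq; intros; ring).
      replace (sum_f_R0 (fun i => g (S i)) N) with (sum_f_R0 g N - g O) by lra.
      nra.
  -
    transitivity (sum_f_R0 (fun l => binom (m + l) m * stirling1 N (m + l) * c ^ l) (S N)
       + sum_f_R0 (fun l => binom (m + l) (S m) * stirling1 N (m + l) * c ^ l) (S N)
       - INR N * sum_f_R0 (fun l => binom (S m + l) (S m) * stirling1 N (S m + l) * c ^ l) (S N)).
    + rewrite <- plus_sum. rewrite scal_sum. rewrite <- minus_sum.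
      apply sum_eq. intros i _. simpl Nat.add. rewrite stir_S. simpl binom. ring.
    + rewrite (sum_top0 (fun l => binom (m + l) m * _ * _)).
      2:{ rewrite stir_gt by lia. ring. }
      rewrite (sum_top0 (fun l => binom (S m + l) (S m) * _ * _)).
      2:{ rewrite stir_gt by lia. ring. }
      rewrite sum_S. rewrite Nat.add_0_r. rewrite (binom_gt m (S m)) by lia.
      rewrite scal_sum.
      replace (sum_f_R0 (fun i => binom (m + S i) (S m) * stirling1 N (m + S i) * c ^ S i) N)
        with (sum_f_R0 (fun i => binom (S m + i) (S m) * stirling1 N (S m + i) * c ^ i * c) N).
      2:{ apply sum_eq; intros i _. rewrite <- plus_n_Sm. simpl. ring. }
      unfold W. rewrite <- !scal_sum. ring.
Qed.

Lemma W0 c m : W c 0 m = match m with O => 1 | _ => 0 end.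
Proof. unfold W. destruct m; simpl; ring. Qed.

Lemma W_B : forall N c m, W c (S N) m = Wm1 (c - 1) N m + c * W (c - 1) N m.
Proof.
  induction N; intros c m.
  - rewrite W_A. unfold Wm1. destruct m as [|[|m]]; rewrite ?W0; simpl; ring.
  - rewrite W_A. rewrite (W_A (c - 1)). rewrite IHN.
    destruct m as [|m].
    + cbn [Wm1]. rewrite S_INR. ring.
    + cbn [Wm1]. rewrite (W_A (c-1) N m). rewrite IHN. rewrite S_INR. cbn [Wm1]. ring.
Qed.

Lemma W_C N m : W ((INR N + 1)/2) (S (S N)) m =
  Wm2 ((INR N - 1)/2) N m - ((INR N + 1)/2)^2 * W ((INR N - 1)/2) N m.
Proof.
  rewrite W_A. rewrite W_B.
  replace ((INR N + 1) / 2 - 1) with ((INR N - 1)/2) by field.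
  destruct m as [|m].
  - cbn [Wm1 Wm2]. rewrite S_INR. field.
  - unfold Wm1 at 1. rewrite W_B.
    replace ((INR N + 1) / 2 - 1) with ((INR N - 1)/2) by field.
    destruct m as [|m]; cbn [Wm1 Wm2]; rewrite S_INR; field.
Qed.

Fixpoint T (n m : nat) : R :=
  match n with
  | O => match m with O => 1 | _ => 0 end
  | S O => match m with 1%nat => 1 | _ => 0 end
  | S (S n') => (match m with S (S m') => T n' m' | _ => 0 end) - (INR n' + 1)^2 * T n' m
  end.

Lemma two_step (P : nat -> Prop) : P O -> P 1%nat -> (forall n, P n -> P (S (S n))) -> forall n, P n.
Proof.
  intros H0 H1 HS n. assert (P n /\ P (S n)); [|tauto].
  induction n; [tauto|]. destruct IHn; split; auto.
Qed.

Lemma T_W : forall N m, T N m * 2 ^ m = 2 ^ N * W ((INR N - 1)/2) N m.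
Proof.
  apply (two_step (fun N => forall m, T N m * 2 ^ m = 2 ^ N * W ((INR N - 1)/2) N m)).
  - intros m. rewrite W0. destruct m; simpl; ring.
  - intros m. replace ((INR 1 - 1)/2) with 0 by (simpl; field).
    unfold W. destruct m as [|[|m]]; simpl; try ring.
    idtac.
  - intros N IH m.
    replace ((INR (S (S N)) - 1) / 2) with ((INR N + 1)/2) by (rewrite !S_INR; field).
    rewrite W_C. simpl T. rewrite Rmult_minus_distr_r.
    destruct m as [|[|m]].
    + simpl Wm2. rewrite Rmult_assoc, IH. simpl. field.
    + simpl Wm2. rewrite Rmult_assoc, IH. simpl. field.
    + simpl Wm2. rewrite Rmult_assoc, IH.
      replace (T N m * 2 ^ S (S m)) with (4 * (T N m * 2 ^ m)) by (simpl; ring).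
      rewrite IH. simpl. field.
Qed.

Definition Tm2 N m := match m with S (S m') => T N m' | _ => 0 end.

Lemma T_SS N m : T (S (S N)) m = Tm2 N m - (INR N + 1)^2 * T N m.
Proof. reflexivity. Qed.

Lemma T_gt : forall n m, (n < m)%nat -> T n m = 0.
Proof.
  apply (two_step (fun n => forall m, (n < m)%nat -> T n m = 0)).
  - intros m H; destruct m; [lia|reflexivity].
  - intros m H; destruct m as [|[|m]]; [lia|lia|reflexivity].
  - intros n IH m H. rewrite T_SS. unfold Tm2. destruct m as [|[|m]]; try lia.
    rewrite !IH by lia. ring.
Qed.

Lemma T_diag : forall n, T n n = 1.
Proof.
  apply two_step; try reflexivity.
  intros n IH. rewrite T_SS. simpl Tm2. rewrite IH, (T_gt n (S (S n))) by lia. ring.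
Qed.

Lemma T_odd : forall n m j, (n + m = 2 * j + 1)%nat -> T n m = 0.
Proof.
  apply (two_step (fun n => forall m j, (n + m = 2 * j + 1)%nat -> T n m = 0)).
  - intros m j H. destruct m; [lia|reflexivity].
  - intros m j H. destruct m as [|[|m]]; [reflexivity|lia|reflexivity].
  - intros n IH m j H. rewrite T_SS. unfold Tm2.
    destruct m as [|[|m]].
    + rewrite (IH 0%nat (j-1)%nat) by lia. ring.
    + rewrite (IH 1%nat (j-1)%nat) by lia. ring.
    + rewrite (IH m (j-2)%nat) by lia. rewrite (IH (S (S m)) (j-1)%nat) by lia. ring.
Qed.

Lemma T_bound : forall n m, Rabs (T n m) <= INR (Factorial.fact (S n)).
Proof.
  apply (two_step (fun n => forall m, Rabs (T n m) <= INR (Factorial.fact (S n)))).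
  - intros m; destruct m; simpl; rewrite ?Rabs_R1, ?Rabs_R0; lra.
  - intros m; destruct m as [|[|m]]; simpl; rewrite ?Rabs_R1, ?Rabs_R0; lra.
  - intros n IH m. rewrite T_SS.
    assert (HT2 : Rabs (Tm2 n m) <= INR (Factorial.fact (S n))).
    { unfold Tm2; destruct m as [|[|m]]; rewrite ?Rabs_R0; auto; apply pos_INR. }
    assert (E : INR (Factorial.fact (S (S (S n)))) = (INR n + 3) * (INR n + 2) * INR (Factorial.fact (S n))).
    { change (Factorial.fact (S (S (S n)))) with ((S (S (S n))) * Factorial.fact (S (S n)))%nat.
      change (Factorial.fact (S (S n))) with ((S (S n)) * Factorial.fact (S n))%nat.
      rewrite !mult_INR, !S_INR. ring. }
    rewrite E.
    pose proof (IH m) as H1. pose proof (pos_INR n) as Hn.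
    pose proof (pos_INR (Factorial.fact (S n))) as Hf.
    eapply Rle_trans. apply Rabs_triang.
    rewrite Rabs_Ropp, Rabs_mult, (Rabs_right ((INR n + 1)^2)) by nra.
    nra.
Qed.

Lemma Q_W m k : Q (m + 1) (2 * k) 2 = W ((INR (m + 2 * k) - 1)/2) (m + 2 * k) m.
Proof.
  unfold Q, W. rewrite (Nat.add_comm m (2 * k)).
  rewrite (sum_ext_zero _ (2 * k) m).
  2:{ intros i Hi. rewrite stir_gt by lia. ring. }
  apply sum_eq. intros i Hi.
  replace (m + 1 + i - 1)%nat with (m + i)%nat by lia.
  replace (m + 1 - 1)%nat with m by lia.
  replace (m + 1 + 2 * k - 1)%nat with (2 * k + m)%nat by lia.
  rewrite binom_C by lia.
  replace ((INR (m + 1 + 2 * k) - 2) / 2) with ((INR (2 * k + m) - 1) / 2).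
  2:{ rewrite !plus_INR. simpl. field. }
  reflexivity.
Qed.

Lemma T_Q m k : T (m + 2 * k) m = 2 ^ (2 * k) * Q (m + 1) (2 * k) 2.
Proof.
  pose proof (T_W (m + 2 * k) m) as H. rewrite <- Q_W in H.
  rewrite pow_add in H. pose proof (pow_lt 2 m ltac:(lra)).
  apply Rmult_eq_reg_r with (2 ^ m); [|lra]. rewrite H. ring.
Qed.

Definition cc (m n : nat) : R := INR (Factorial.fact m) * T n m / INR (Factorial.fact n).
Definition dd (m n : nat) : R :=
  match m, n with
  | O, O => 1
  | O, S _ => 0
  | S _, O => 0
  | S m', S n' => INR (Factorial.fact (S m')) * T n' m' / INR (Factorial.fact (S n'))
  end.

Lemma pow_le1 r n : 0 <= r <= 1 -> 0 <= r ^ n <= 1.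
Proof. intros H; induction n; simpl; nra. Qed.

Lemma geo_bound r n : 0 <= r < 1 -> INR (S n) * r ^ n * (1 - r) <= 1 - r ^ (S n).
Proof.
  intros Hr. induction n.
  - simpl. lra.
  - rewrite S_INR. simpl pow. simpl pow in IHn.
    pose proof (pow_le1 r n ltac:(lra)).
    pose proof (pos_INR n). rewrite S_INR in IHn.
    assert (H2 : r * ((INR n + 1) * r ^ n * (1 - r)) <= r * (1 - r * r ^ n))
      by (apply Rmult_le_compat_l; lra).
    assert (H3 : r * r ^ n <= 1) by nra.
    assert (H4 : 0 <= (1 - r) * (1 - r * r ^ n)) by (apply Rmult_le_pos; lra).
    rewrite S_INR. lra.
Qed.

Lemma radius_lemma (a : nat -> R) K :
  (forall n, Rabs (a n) <= K * INR (S n)) ->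
  forall t, Rabs t < 1 -> Rbar_lt (Rabs t) (CV_radius a).
Proof.
  intros Ha t Ht.
  set (r := (Rabs t + 1) / 2).
  assert (Hr : 0 <= r < 1) by (unfold r; pose proof (Rabs_pos t); lra).
  assert (HK : 0 <= K).
  { specialize (Ha O). simpl in Ha. pose proof (Rabs_pos (a O)). lra. }
  apply Rbar_lt_le_trans with (Finite r).
  { simpl. unfold r. lra. }
  apply (proj1 (CV_radius_bounded a)).
  exists (K / (1 - r)). intros n.
  rewrite Rabs_mult, (Rabs_right (r ^ n)) by (apply Rle_ge, pow_le; lra).
  pose proof (geo_bound r n Hr). pose proof (pow_le1 r (S n) ltac:(lra)).
  pose proof (pow_le1 r n ltac:(lra)).
  apply Rle_trans with (K * INR (S n) * r ^ n).
  { apply Rmult_le_compat_r; [lra|apply Ha]. }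
  apply Rmult_le_reg_r with (1 - r); [lra|].
  replace (K / (1 - r) * (1 - r)) with K by (field; lra).
  pose proof (pos_INR (S n)). nra.
Qed.

Lemma cc_bound m n : Rabs (cc m n) <= INR (Factorial.fact m) * INR (S n).
Proof.
  unfold cc. pose proof (T_bound n m) as H.
  pose proof (INR_fact_lt_0 m). pose proof (INR_fact_lt_0 n).
  change (Factorial.fact (S n)) with (S n * Factorial.fact n)%nat in H.
  rewrite mult_INR in H.
  rewrite Rabs_div by (intro; lra). rewrite Rabs_mult.
  rewrite (Rabs_right (INR (Factorial.fact m))) by lra.
  rewrite (Rabs_right (INR (Factorial.fact n))) by lra.
  apply Rmult_le_reg_r with (INR (Factorial.fact n)); [lra|].
  field_simplify; [|lra]. nra.
Qed.

Lemma dd_bound m n : Rabs (dd m n) <= INR (Factorial.fact m) * INR (S n).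
Proof.
  destruct m as [|m]; destruct n as [|n]; cbn [dd].
  - simpl. rewrite Rabs_R1. lra.
  - rewrite Rabs_R0. apply Rmult_le_pos; apply pos_INR.
  - rewrite Rabs_R0. apply Rmult_le_pos; apply pos_INR.
  - pose proof (T_bound n m) as H.
    pose proof (INR_fact_lt_0 (S m)). pose proof (INR_fact_lt_0 (S n)).
    rewrite Rabs_div by (intro; lra). rewrite Rabs_mult.
    rewrite (Rabs_right (INR (Factorial.fact (S m)))) by lra.
    rewrite (Rabs_right (INR (Factorial.fact (S n)))) by lra.
    apply Rmult_le_reg_r with (INR (Factorial.fact (S n))); [lra|].
    field_simplify; [|lra]. pose proof (pos_INR (S (S n))).
    assert (1 <= INR (S (S n))) by (rewrite !S_INR; pose proof (pos_INR n); lra).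
    pose proof (Rabs_pos (T n m)).
    assert (0 <= INR (Factorial.fact (S m)) * (INR (Factorial.fact (S n)) - Rabs (T n m))) by (apply Rmult_le_pos; lra).
    assert (0 <= INR (Factorial.fact (S m)) * INR (Factorial.fact (S n)) * (INR (S (S n)) - 1))
      by (apply Rmult_le_pos; [apply Rmult_le_pos|]; lra).
    lra.
Qed.

Lemma cc_rad m t : Rabs t < 1 -> Rbar_lt (Rabs t) (CV_radius (cc m)).
Proof. apply radius_lemma with (INR (Factorial.fact m)). apply cc_bound. Qed.
Lemma dd_rad m t : Rabs t < 1 -> Rbar_lt (Rabs t) (CV_radius (dd m)).
Proof. apply radius_lemma with (INR (Factorial.fact m)). apply dd_bound. Qed.

Lemma incr_derive (a : nat -> R) N : PS_incr_1 (PS_derive a) N = INR N * a N.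
Proof. destruct N; simpl; [rewrite Rmult_0_l; reflexivity|]. unfold PS_derive. reflexivity. Qed.

Lemma fact_SS N : INR (Factorial.fact (S (S N))) = (INR N + 2) * (INR N + 1) * INR (Factorial.fact N).
Proof.
  change (Factorial.fact (S (S N))) with (S (S N) * (S N * Factorial.fact N))%nat.
  rewrite !mult_INR, !S_INR. ring.
Qed.
Lemma fact_S N : INR (Factorial.fact (S N)) = (INR N + 1) * INR (Factorial.fact N).
Proof.
  change (Factorial.fact (S N)) with (S N * Factorial.fact N)%nat.
  rewrite !mult_INR, !S_INR. ring.
Qed.

Lemma coef_id m n :
  PS_derive (cc m) n + PS_incr_1 (PS_incr_1 (PS_derive (cc m))) n + PS_incr_1 (cc m) n
  = INR m * dd (pred m) n.
Proof.
  destruct n as [|N].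
  - simpl PS_incr_1. unfold PS_derive, cc. unfold zero; simpl.
    destruct m as [|[|m]]; simpl; field.
  - change (PS_incr_1 (PS_incr_1 (PS_derive (cc m))) (S N)) with (PS_incr_1 (PS_derive (cc m)) N).
    rewrite incr_derive. change (PS_incr_1 (cc m) (S N)) with (cc m N).
    unfold PS_derive, cc.
    pose proof (INR_fact_lt_0 N). pose proof (INR_fact_lt_0 m). pose proof (pos_INR N).
    rewrite fact_SS. rewrite T_SS.
    destruct m as [|[|m]].
    + simpl Tm2. cbn [pred dd]. rewrite !S_INR. simpl INR. field. lra.
    + simpl Tm2. cbn [pred dd]. rewrite !S_INR. field. lra.
    + simpl Tm2. cbn [pred dd]. rewrite !fact_S. rewrite !S_INR. field. lra.
Qed.

Lemma key_id m x : Rabs x < 1 ->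
  (1 + x ^ 2) * PSeries (PS_derive (cc m)) x + x * PSeries (cc m) x
  = INR m * PSeries (dd (pred m)) x.
Proof.
  intros Hx.
  set (A := PS_derive (cc m)).
  assert (RA : Rbar_lt (Rabs x) (CV_radius A)).
  { unfold A. rewrite CV_radius_derive. apply cc_rad; auto. }
  assert (E1 : ex_pseries A x) by (apply CV_radius_inside; auto).
  assert (E2 : ex_pseries (PS_incr_1 (PS_incr_1 A)) x).
  { apply CV_radius_inside. rewrite !CV_radius_incr_1. auto. }
  assert (E3 : ex_pseries (PS_incr_1 (cc m)) x).
  { apply CV_radius_inside. rewrite !CV_radius_incr_1. apply cc_rad; auto. }
  transitivity (PSeries (PS_plus (PS_plus A (PS_incr_1 (PS_incr_1 A))) (PS_incr_1 (cc m))) x).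
  - rewrite PSeries_plus; [|apply ex_pseries_plus; auto|auto].
    rewrite PSeries_plus; auto.
    rewrite !PSeries_incr_1. simpl. ring.
  - rewrite <- PSeries_scal. apply PSeries_ext. intros n.
    unfold PS_plus, PS_scal. unfold plus, scal; simpl. unfold mult; simpl.
    unfold A. rewrite <- coef_id. reflexivity.
Qed.

Lemma const_deriv (h : R -> R) t : Rabs t < 1 ->
  (forall c, Rabs c < 1 -> is_derive h c 0) -> h t = h 0.
Proof.
  intros Ht Hd.
  destruct (MVT_cor4 h (fun _ => 0) 0 (Rabs t)) with (b := t) as [c0 [Hc0 _]].
  - intros c Hc. apply Hd. rewrite Rminus_0_r in Hc. lra.
  - rewrite Rminus_0_r. lra.
  - lra.
Qed.

Lemma sqrt_der c : is_derive (fun x => sqrt (1 + x ^ 2)) c (c / sqrt (1 + c ^ 2)).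
Proof.
  auto_derive.
  - nra.
  - change R in c. replace (1 + c * (c * 1)) with (1 + c ^ 2) by ring. field. apply Rgt_not_eq, sqrt_lt_R0. nra.
Qed.

Lemma asinh_pow_der m c : is_derive (fun x => arcsinh x ^ m) c
  (INR m * / sqrt (1 + c ^ 2) * arcsinh c ^ pred m).
Proof.
  apply is_derive_pow. apply is_derive_Reals.
  rewrite Rplus_comm. apply derivable_pt_lim_arcsinh.
Qed.

Lemma y_step m :
  (forall t, Rabs t < 1 -> PSeries (dd (pred m)) t = arcsinh t ^ (pred m)) ->
  forall t, Rabs t < 1 -> PSeries (cc m) t = arcsinh t ^ m / sqrt (1 + t ^ 2).
Proof.
  intros IH t Ht.
  set (h := fun x => sqrt (1 + x ^ 2) * PSeries (cc m) x - arcsinh x ^ m).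
  assert (H0 : h t = h 0).
  { apply const_deriv; auto. intros c Hc.
    pose proof (is_derive_PSeries (cc m) c (cc_rad m c Hc)) as D2.
    pose proof (is_derive_minus _ _ c _ _ (is_derive_mult _ _ c _ _ (sqrt_der c) D2 Rmult_comm)
                  (asinh_pow_der m c)) as HD.
    replace 0 with (minus (plus (mult (c / sqrt (1 + c ^ 2)) (PSeries (cc m) c))
      (mult (sqrt (1 + c ^ 2)) (PSeries (PS_derive (cc m)) c)))
      (INR m * / sqrt (1 + c ^ 2) * arcsinh c ^ pred m)).
    { exact HD. }
    unfold minus, plus, mult, opp; simpl.
    replace (c * (c * 1)) with (c ^ 2) by ring.
    pose proof (key_id m c Hc) as K. rewrite IH in K by auto.
    assert (Hq : 0 < sqrt (1 + c ^ 2)) by (apply sqrt_lt_R0; nra).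
    assert (Hq2 : sqrt (1 + c ^ 2) * sqrt (1 + c ^ 2) = 1 + c ^ 2) by (apply sqrt_sqrt; nra).
    apply Rmult_eq_reg_r with (sqrt (1 + c ^ 2)); [|lra].
    set (q := sqrt (1 + c ^ 2)) in *.
    set (S0 := PSeries (cc m) c) in *. set (S1 := PSeries (PS_derive (cc m)) c) in *.
    set (A := arcsinh c ^ pred m) in *.
    replace ((c / q * S0 + q * S1 + - (INR m * / q * A)) * q) with (c * S0 + (q * q) * S1 - INR m * A)
      by (field; lra).
    rewrite Hq2. lra. }
  unfold h in H0. rewrite PSeries_0 in H0.
  replace (0 ^ 2) with 0 in H0 by ring. rewrite Rplus_0_r, sqrt_1, arcsinh_0 in H0.
  assert (Hq : 0 < sqrt (1 + t ^ 2)) by (apply sqrt_lt_R0; nra).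
  assert (Hc0 : 1 * cc m 0 - 0 ^ m = 0).
  { unfold cc. destruct m; simpl; field. }
  rewrite Hc0 in H0.
  apply Rmult_eq_reg_l with (sqrt (1 + t ^ 2)); [|lra].
  field_simplify; lra.
Qed.

Lemma d_step m :
  (forall t, Rabs t < 1 -> PSeries (cc m) t = arcsinh t ^ m / sqrt (1 + t ^ 2)) ->
  forall t, Rabs t < 1 -> PSeries (dd (S m)) t = arcsinh t ^ (S m).
Proof.
  intros IH t Ht.
  set (h := fun x => PSeries (dd (S m)) x - arcsinh x ^ (S m)).
  assert (H0 : h t = h 0).
  { apply const_deriv; auto. intros c Hc.
    pose proof (is_derive_PSeries (dd (S m)) c (dd_rad (S m) c Hc)) as D2.
    pose proof (is_derive_minus _ _ c _ _ D2 (asinh_pow_der (S m) c)) as HD.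
    replace 0 with (minus (PSeries (PS_derive (dd (S m))) c)
      (INR (S m) * / sqrt (1 + c ^ 2) * arcsinh c ^ pred (S m))).
    { exact HD. }
    rewrite (S_INR m). unfold minus, plus, opp; simpl.
    assert (E : PSeries (PS_derive (dd (S m))) c = INR (S m) * PSeries (cc m) c).
    { rewrite <- PSeries_scal. apply PSeries_ext. intros n.
      unfold PS_derive, PS_scal.
      change (scal (INR (S m)) (cc m n)) with (INR (S m) * cc m n).
      unfold cc. cbn [dd]. rewrite !fact_S.
      pose proof (INR_fact_lt_0 n). pose proof (INR_fact_lt_0 m).
      pose proof (pos_INR n). pose proof (pos_INR m).
      rewrite !S_INR. field. lra. }
    rewrite E, IH by auto. rewrite S_INR.
    replace (c * (c * 1)) with (c ^ 2) by ring.
    assert (Hq : 0 < sqrt (1 + c ^ 2)) by (apply sqrt_lt_R0; nra).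
    field. lra. }
  unfold h in H0. rewrite PSeries_0 in H0. rewrite arcsinh_0 in H0.
  cbn [dd] in H0. simpl in H0. simpl. lra.
Qed.

Lemma dd0 t : Rabs t < 1 -> PSeries (dd 0) t = arcsinh t ^ 0.
Proof.
  intros Ht. simpl pow.
  assert (H0 : PSeries (dd 0) t = PSeries (dd 0) 0).
  { apply const_deriv; auto. intros c Hc.
    pose proof (is_derive_PSeries (dd 0) c (dd_rad 0 c Hc)) as D2.
    replace 0 with (PSeries (PS_derive (dd 0)) c). { exact D2. }
    rewrite <- (PSeries_const_0 c). apply PSeries_ext. intros n.
    unfold PS_derive. cbn [dd]. ring. }
  rewrite H0, PSeries_0. reflexivity.
Qed.

Lemma analytic m :
  (forall t, Rabs t < 1 -> PSeries (dd m) t = arcsinh t ^ m) /\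
  (forall t, Rabs t < 1 -> PSeries (cc m) t = arcsinh t ^ m / sqrt (1 + t ^ 2)).
Proof.
  induction m.
  - split. apply dd0. apply y_step. simpl. apply dd0.
  - destruct IHm as [Hd0 Hc]. assert (Hd := d_step m Hc).
    split; auto. apply y_step. simpl. auto.
Qed.

Definition termf (m : nat) (t : R) := (fun j : nat =>
                 let k := (j + 1)%nat in
                 Q (m + 1) (2 * k) 2 / Binomial.C (m + 2 * k) m
                 * (2 * t) ^ (2 * k) / INR (Factorial.fact (2 * k))).

Lemma term_id m t k :
  cc m (m + 2 * k) * t ^ (m + 2 * k) =
  t ^ m * (Q (m + 1) (2 * k) 2 / Binomial.C (m + 2 * k) m
                 * (2 * t) ^ (2 * k) / INR (Factorial.fact (2 * k))).
Proof.
  unfold cc. rewrite T_Q. unfold Binomial.C.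
  replace (m + 2 * k - m)%nat with (2 * k)%nat by lia.
  rewrite Rpow_mult_distr, pow_add.
  pose proof (INR_fact_lt_0 m). pose proof (INR_fact_lt_0 (2 * k)).
  pose proof (INR_fact_lt_0 (m + 2 * k)).
  field. repeat split; lra.
Qed.

Lemma u_small m t n : (n < m)%nat -> cc m n * t ^ n = 0.
Proof. intros H. unfold cc. rewrite T_gt by lia. unfold Rdiv. ring. Qed.

Lemma u_odd m t j : cc m (m + 2 * j + 1) * t ^ (m + 2 * j + 1) = 0.
Proof. unfold cc. rewrite (T_odd _ _ (m + j)) by lia. unfold Rdiv. ring. Qed.

Lemma u_diag m t : cc m m * t ^ m = t ^ m.
Proof.
  unfold cc. rewrite T_diag. pose proof (INR_fact_lt_0 m). field. lra.
Qed.

Lemma sum_lt m t : forall n, (n < m)%nat -> sum_f_R0 (fun n => cc m n * t ^ n) n = 0.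
Proof.
  induction n; intros H; cbn [sum_f_R0].
  - apply (u_small m t 0). lia.
  - rewrite IHn by lia. rewrite u_small by lia. ring.
Qed.

Lemma sum_m m t : sum_f_R0 (fun n => cc m n * t ^ n) m = t ^ m.
Proof.
  destruct m as [|m].
  - cbn [sum_f_R0]. apply (u_diag 0).
  - cbn [sum_f_R0]. rewrite sum_lt by lia. rewrite u_diag. ring.
Qed.

Lemma sS (f : nat -> R) n : sum_f_R0 f (S n) = sum_f_R0 f n + f (S n).
Proof. reflexivity. Qed.

Lemma partial m t J :
  sum_f_R0 (fun n => cc m n * t ^ n) (m + 2 * (S J)) = t ^ m * (1 + sum_f_R0 (termf m t) J).
Proof.
  induction J.
  - replace (m + 2 * 1)%nat with (S (S m)) by lia. rewrite !sS.
    rewrite sum_m. replace (S m) with (m + 2 * 0 + 1)%nat by lia. rewrite u_odd.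
    replace (S (m + 2 * 0 + 1)) with (m + 2 * 1)%nat by lia. rewrite term_id.
    unfold termf. cbn [sum_f_R0]. replace (0 + 1)%nat with 1%nat by lia. ring.
  - replace (m + 2 * S (S J))%nat with (S (S (m + 2 * S J))) by lia.
    rewrite !sS. rewrite IHJ.
    replace (S (m + 2 * S J)) with (m + 2 * S J + 1)%nat by lia. rewrite u_odd.
    replace (S (m + 2 * S J + 1)) with (m + 2 * S (S J))%nat by lia. rewrite term_id.
    change (sum_f_R0 (termf m t) (S J)) with (sum_f_R0 (termf m t) J + termf m t (S J)).
    assert (E : termf m t (S J) = Q (m + 1) (2 * S (S J)) 2 / Binomial.C (m + 2 * S (S J)) m * (2 * t) ^ (2 * S (S J)) / INR (Factorial.fact (2 * S (S J)))) by (unfold termf; replace (S J + 1)%nat with (S (S J)) by lia; reflexivity).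
    rewrite E. ring.
Qed.

Theorem mainTheorem13 (m : nat) (t : R) (ht : Rabs t < 1) :
  exists L : R,
    is_series (fun j : nat =>
                 let k := (j + 1)%nat in
                 Q (m + 1) (2 * k) 2 / Binomial.C (m + 2 * k) m
                 * (2 * t) ^ (2 * k) / INR (Factorial.fact (2 * k))) L
    /\ (arcsinh t) ^ m / sqrt (1 + t ^ 2) = t ^ m * (1 + L).
Proof.
  destruct (analytic m) as [_ Hc].
  rewrite <- (Hc t ht).
  destruct (Req_dec t 0) as [Ht0|Ht0].
  - subst t. exists 0. split.
    + apply is_series_ext with (fun _ => 0).
      * intros j. cbv zeta. rewrite Rmult_0_r.
        rewrite pow_i by lia. unfold Rdiv. rewrite Rmult_0_r, Rmult_0_l. reflexivity.
      * change (is_lim_seq (sum_n (fun _ : nat => 0)) (Finite 0)).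
        apply (is_lim_seq_ext (fun _ => 0)); [|apply is_lim_seq_const].
        intros n. rewrite sum_n_Reals. induction n; simpl; [reflexivity|].
        rewrite <- IHn. ring.
    + rewrite PSeries_0. unfold cc. destruct m; simpl; field.
  - set (y := PSeries (cc m) t).
    assert (Hu : is_series (fun n => cc m n * t ^ n) y).
    { unfold y, PSeries. apply Series_correct. apply ex_series_Rabs.
      apply CV_disk_inside. apply cc_rad. auto. }
    assert (Hsub : is_lim_seq (fun J => sum_n (fun n => cc m n * t ^ n) (m + 2 * S J)) y).
    { apply (is_lim_seq_subseq (sum_n (fun n => cc m n * t ^ n)) y (fun J => (m + 2 * S J)%nat)).
      - apply eventually_subseq. intros n. lia.
      - exact Hu. }
    assert (Htm : t ^ m <> 0) by (apply pow_nonzero; auto).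
    exists (y / t ^ m - 1). split.
    + change (is_series (termf m t) (y / t ^ m - 1)).
      assert (H2 : is_lim_seq (fun J => sum_n (fun n => cc m n * t ^ n) (m + 2 * S J) * / t ^ m + (-1))
                     (y * / t ^ m + (-1))).
      { apply is_lim_seq_plus'. apply (is_lim_seq_scal_r _ _ y). exact Hsub. apply is_lim_seq_const. }
      apply is_lim_seq_ext with (v := sum_n (termf m t)) in H2.
      * replace (y / t ^ m - 1) with (y * / t ^ m + -1) by (unfold Rdiv; ring). exact H2.
      * intros J. rewrite !sum_n_Reals. rewrite partial. field. auto.
    + field. auto.
Qed.
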